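(* Let $k\ge 1$ and let $H$ be a connected $k$-regular $k$-edge-colorable graph with no loops or semi-edges (multiple ordinary edges allowed). Then there exists a connected simple $k$-regular $k$-edge-colorable graph $G$ and a vertex $u\in V(G)$ such that for every vertex $x\in V(H)$ and every bijection $\sigma:E_G(u)\to E_H(x)$ there exists a covering projection from $G$ to $H$ that maps $u$ to $x$ and agrees with $\sigma$ on $E_G(u)$.
   Context: $E_G(u)$ denotes the set of edges of $G$ incident with $u$. A graph is simple if it has no loops, no semi-edges and no multiple edges. A covering projection between graphs without loops and semi-edges is a map sending vertices to vertices and edges to edges, preserving incidences, such that for every edge $xy$ of the target its preimage is a perfect matching between the preimages of $x$ and $y$ (equivalently, it restricts to a bijection from $E_G(v)$ onto $E_H(f(v))$ for every vertex $v$). *)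

(* Defs.v *)
From mathcomp Require Import all_boot.
Set Implicit Arguments. Unset Strict Implicit. Unset Printing Implicit Defensive.

(* A finite multigraph: every edge has two (distinct) end-vertices; multiple
   edges are allowed, loops and semi-edges are not. The orientation
   (end1/end2) is irrelevant for all notions below. *)
Record mgraph := MGraph {
  vert : finType;
  edge : finType;
  end1 : edge -> vert;
  end2 : edge -> vert;
  noloop : forall e, end1 e != end2 e }.

Section Defs.
Variable G : mgraph.

Definition ends (e : edge G) : {set vert G} := [set end1 e; end2 e].

Definition inc_edges (v : vert G) : {set edge G} := [set e | v \in ends e].

Definition adj : rel (vert G) :=
  fun u v => [exists e : edge G, (end1 e == u) && (end2 e == v)
                              || (end1 e == v) && (end2 e == u)].

Definition connected_graph : Prop := forall u v : vert G, connect adj u v.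

Definition regular (k : nat) : Prop := forall v : vert G, #|inc_edges v| = k.

Definition simple_graph : Prop := forall e f : edge G, ends e = ends f -> e = f.

Definition edge_colorable (k : nat) : Prop :=
  exists c : edge G -> 'I_k, forall e f : edge G,
    e != f -> ~~ [disjoint ends e & ends f] -> c e != c f.
End Defs.

Definition covering (G H : mgraph) (fV : vert G -> vert H)
  (fE : edge G -> edge H) : Prop :=
  (forall e : edge G, [set fV (end1 e); fV (end2 e)] = ends (fE e)) /\
  (forall v : vert G, {in inc_edges v &, injective fE} /\
                      fE @: inc_edges v = inc_edges (fV v)).

(* Main.v *)
Require Import Defs.
From mathcomp Require Import all_boot.
Set Implicit Arguments. Unset Strict Implicit. Unset Printing Implicit Defensive.
Section HC.
Variables (k : nat) (H : mgraph) (c : edge H -> 'I_k).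
Hypothesis Hreg : forall y : vert H, #|inc_edges y| = k.
Hypothesis Hc : forall e f : edge H, e != f -> ~~ [disjoint @ends H e & @ends H f] -> c e != c f.

Definition other (e : edge H) (y : vert H) := if end1 e == y then end2 e else end1 e.
Definition he (y : vert H) (j : 'I_k) : option (edge H) := [pick e in inc_edges y | c e == j].
Definition mH (j : 'I_k) (y : vert H) := if he y j is Some e then other e y else y.

Lemma inc_ends (y : vert H) (e : edge H) : (e \in inc_edges y) = (y \in ends e).
Proof. by rewrite inE. Qed.

Lemma cinj y : {in inc_edges y &, injective c}.
Proof.
move=> e f he hf hcef; case: (eqVneq e f) => // nef.
suff hd : [disjoint @ends H e & @ends H f] = false.
  by move: (Hc nef); rewrite hd hcef eqxx => /(_ isT).
apply/negP; rewrite disjoint_subset => /subsetP /(_ y).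
rewrite !inc_ends in he hf; rewrite he /= inE hf => /(_ isT) //.
Qed.

Lemma cimset y : [set c e | e in inc_edges y] = [set: 'I_k].
Proof.
apply/eqP; rewrite eqEcard subsetT cardsT card_ord card_in_imset ?Hreg //.
  by rewrite leqnn.
exact: cinj.
Qed.

Lemma he_spec y j : exists e, [/\ he y j = Some e, e \in inc_edges y & c e = j].
Proof.
rewrite /he; case: pickP => [e /andP[h /eqP hc] | none].
  by exists e.
have : j \in [set c e | e in inc_edges y] by rewrite cimset inE.
case/imsetP => e he hj; move: (none e) => /=; rewrite he hj eqxx //.
Qed.

Lemma he_inc y e : e \in inc_edges y -> he y (c e) = Some e.
Proof.
move=> h; have [e' [-> h' hc]] := he_spec y (c e).
by rewrite (cinj h' h hc).
Qed.

Lemma ends_other (e : edge H) y : y \in ends e -> ends e = [set y; other e y].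
Proof.
rewrite /ends /other => h; case: (eqVneq (end1 e) y) => [<- //|ne].
move: h; rewrite !inE eq_sym (negPf ne) /= => /eqP ->; exact: setUC.
Qed.

Lemma other_in (e : edge H) y : y \in ends e -> other e y \in ends e.
Proof. by move=> h; rewrite (ends_other h) !inE eqxx orbT. Qed.

Lemma other_other (e : edge H) y : y \in ends e -> other e (other e y) = y.
Proof.
move=> h; rewrite /other; case: (eqVneq (end1 e) y) => [<-|ne].
  by rewrite (negPf (noloop e)).
rewrite eqxx; move: h; rewrite !inE eq_sym (negPf ne) /= => /eqP ->//.
Qed.

Lemma mH_he y j e : he y j = Some e -> mH j y = other e y.
Proof. by rewrite /mH => ->. Qed.

Lemma he_mH y j : he (mH j y) j = he y j.
Proof.
have [e [h hin hc]] := he_spec y j.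
rewrite (mH_he h) h -hc; apply: he_inc.
by rewrite inc_ends other_in // -inc_ends.
Qed.

Lemma mHK j : involutive (mH j).
Proof.
move=> y; have [e [h hin hc]] := he_spec y j.
have h2 : he (mH j y) j = Some e by rewrite he_mH.
rewrite (mH_he h2) (mH_he h) other_other // -inc_ends //.
Qed.

Lemma ends_he y j e : he y j = Some e -> ends e = [set y; mH j y].
Proof.
move=> h; rewrite (mH_he h); apply: ends_other.
have [e' [h' he _]] := he_spec y j. move: h'; rewrite h => -[->].
by rewrite -inc_ends.
Qed.
Definition PP := ({ffun 'I_k -> 'I_k} * vert H)%type.
Definition V0 := ({ffun 'I_k -> bool} * {ffun PP -> vert H})%type.
Definition flip (b : {ffun 'I_k -> bool}) i : {ffun 'I_k -> bool} :=
  [ffun j => if j == i then ~~ b j else b j].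
Definition iota0 (i : 'I_k) (v : V0) : V0 :=
  (flip v.1 i, [ffun q : PP => mH (q.1 i) (v.2 q)]).
Definition r0 : rel V0 := fun v w => [exists i, w == iota0 i v].
Definition u0 : V0 := ([ffun _ => false], [ffun q : PP => q.2]).
Definition VG := {v : V0 | connect r0 u0 v}.
Lemma iota0_conn i v : connect r0 u0 v -> connect r0 u0 (iota0 i v).
Proof. move=> h; apply: connect_trans h (connect1 _); apply/existsP; exists i; done. Qed.
Definition iotaG i (v : VG) : VG := exist _ (iota0 i (val v)) (iota0_conn i (valP v)).
Definition EG := {p : VG * 'I_k | ~~ (val p.1).1 p.2}.
Definition g1 (p : EG) : VG := (val p).1.
Definition g2 (p : EG) : VG := iotaG (val p).2 (val p).1.
Lemma flip_at b i : flip b i i = ~~ b i.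
Proof. by rewrite ffunE eqxx. Qed.
Lemma flip_neq b i j : j != i -> flip b i j = b j.
Proof. by rewrite ffunE => /negPf ->. Qed.
Lemma gnoloop (p : EG) : g1 p != g2 p.
Proof.
apply/eqP => /(congr1 (fun v : VG => (val v).1 (val p).2)).
rewrite /g2 /= flip_at. by case: ((val (val p).1).1 _).
Qed.
Definition Gr := @MGraph VG EG g1 g2 gnoloop.

Lemma flipK i : involutive (flip ^~ i).
Proof. by move=> b; apply/ffunP => j; rewrite !ffunE; case: eqP => //= ->; rewrite negbK. Qed.

Lemma iota0K i : involutive (iota0 i).
Proof.
case=> b g; rewrite /iota0 /= flipK; congr pair; apply/ffunP => q.
by rewrite !ffunE mHK.
Qed.

Lemma iotaGK i : involutive (iotaG i).
Proof. by move=> v; apply: val_inj; rewrite /= iota0K. Qed.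

Lemma bit_at i (v : vert Gr) : (val (iotaG i v)).1 i = ~~ (val v).1 i.
Proof. by rewrite /= flip_at. Qed.
Lemma bit_neq i j (v : vert Gr) : j != i -> (val (iotaG i v)).1 j = (val v).1 j.
Proof. by move=> h; rewrite /= flip_neq. Qed.

Lemma geP (v : vert Gr) i : ~~ (val (if (val v).1 i then iotaG i v else v)).1 i.
Proof. by case h: ((val v).1 i); rewrite ?bit_at h. Qed.

Definition ge (v : vert Gr) i : EG := exist _ (if (val v).1 i then iotaG i v else v, i) (geP v i).
Definition colG (e : edge Gr) : 'I_k := (val e).2.

Lemma colG_ge (v : vert Gr) i : colG (ge v i) = i.
Proof. by []. Qed.

Lemma inc_ge (v : vert Gr) (e : edge Gr) : (e \in inc_edges v) = (e == ge v (colG e)).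
Proof.
case: e => [[w i] /= hb]; rewrite inE /ends !inE /g1 /g2 /colG /=.
apply/idP/eqP.
  case/orP => /eqP ->; apply: val_inj => /=.
    by rewrite (negPf hb).
  by rewrite bit_at (negPf hb) /= iotaGK.
move/(congr1 val) => /= [hw]; change ((v == w) || (v == iotaG i w)); rewrite hw; case: ((val v).1 i) => /=.
  by rewrite iotaGK eqxx orbT.
by rewrite eqxx.
Qed.

Lemma inc_ge_in (v : vert Gr) i : ge v i \in @inc_edges Gr v.
Proof. by rewrite inc_ge colG_ge. Qed.

Lemma inc_set (v : vert Gr) : @inc_edges Gr v = [set ge v i | i : 'I_k].
Proof.
apply/setP => e; apply/idP/imsetP.
  by rewrite inc_ge => /eqP ->; exists (colG e).
by case=> i _ ->; apply: inc_ge_in.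
Qed.

Lemma ge_inj (v : vert Gr) : injective (ge v).
Proof. by move=> i j /(congr1 colG). Qed.

Lemma Gr_regular : regular Gr k.
Proof. by move=> v; rewrite inc_set card_imset ?card_ord //; apply: ge_inj. Qed.

Lemma Gr_colorable : edge_colorable Gr k.
Proof.
exists colG => e f nef; apply: contraNneq => hc.
rewrite disjoint_subset; apply/subsetP => v hv; rewrite inE; apply/negP => hv2.
have : e \in inc_edges v by rewrite inE.
have : f \in inc_edges v by rewrite inE.
rewrite !inc_ge => /eqP hf /eqP he'.
by move: nef; rewrite he' hf hc eqxx.
Qed.

Lemma iota_neq i (v : vert Gr) : iotaG i v != v.
Proof.
apply/eqP => /(congr1 (fun w : VG => (val w).1 i)); rewrite bit_at.
by case: ((val v).1 i).
Qed.

Lemma ends_col (e f : edge Gr) : ends e = ends f -> colG e = colG f.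
Proof.
case: e => [[a i] ha]; case: f => [[b j] hb].
rewrite /colG /= => hs; apply/eqP; apply/negPn/negP => nij.
change ([set a; iotaG i a] = [set b; iotaG j b]) in hs.
have h1 : a \in [set b; iotaG j b] by rewrite -hs !inE eqxx.
have h2 : iotaG i a \in [set b; iotaG j b] by rewrite -hs !inE eqxx orbT.
move: h1 h2; rewrite !inE => /orP [] /eqP ->.
  rewrite (negPf (iota_neq _ _)) /= => /eqP.
  move/(congr1 (fun w : VG => (val w).1 i)).
  by rewrite bit_at bit_neq //; case: ((val b).1 i).
rewrite (negPf (iota_neq _ _)) orbF => /eqP.
move/(congr1 (fun w : VG => (val w).1 i)).
by rewrite bit_at bit_neq //; case: ((val b).1 i).
Qed.

Lemma Gr_simple : simple_graph Gr.
Proof.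
move=> e f hs.
have : f \in @inc_edges Gr (g1 e) by rewrite inE -hs !inE eqxx.
have : e \in @inc_edges Gr (g1 e) by rewrite inE /ends !inE eqxx.
rewrite !inc_ge => /eqP he /eqP hf.
by rewrite [RHS]hf -(ends_col hs) -he.
Qed.

Lemma g1_ge (v : vert Gr) i : g1 (ge v i) = if (val v).1 i then iotaG i v else v.
Proof. by []. Qed.
Lemma g2_ge (v : vert Gr) i : g2 (ge v i) = iotaG i (if (val v).1 i then iotaG i v else v).
Proof. by []. Qed.

Lemma adj_sym : symmetric (@adj Gr).
Proof.
move=> a b; rewrite /adj; apply/existsP/existsP => -[e h]; exists e; by rewrite orbC.
Qed.

Lemma adj_iota (v : vert Gr) i : @adj Gr v (iotaG i v).
Proof.
apply/existsP; exists (ge v i); rewrite /= g1_ge g2_ge.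
case: ((val v).1 i) => /=; last by rewrite !eqxx.
by rewrite iotaGK !eqxx orbT.
Qed.

Definition uG : VG := exist _ u0 (connect0 _ _).

Lemma lift_path p (x : VG) : path r0 (val x) p ->
  forall y : VG, val y = last (val x) p -> connect (@adj Gr) x y.
Proof.
elim: p x => [|z p IH] x /=.
  by move=> _ y /val_inj ->.
case/andP => /existsP [i /eqP hz] hp y hy.
apply: connect_trans (connect1 (adj_iota x i)) _.
by apply: IH; rewrite /= -hz.
Qed.

Lemma Gr_connected : connected_graph Gr.
Proof.
have hu : forall v : VG, connect (@adj Gr) uG v.
  move=> v; case/connectP: (valP v) => p hp hl.
  exact: (@lift_path p uG hp v hl).
move=> a b; apply: connect_trans (hu b).
by rewrite (sym_connect_sym adj_sym).
Qed.

Section Cov.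
Variables (x : vert H) (sigma : edge Gr -> edge H).
Hypothesis sinj : {in @inc_edges Gr uG &, injective sigma}.
Hypothesis sim : sigma @: @inc_edges Gr uG = inc_edges x.

Definition pi : {ffun 'I_k -> 'I_k} := [ffun i => c (sigma (ge uG i))].
Definition fV (w : vert Gr) : vert H := (val w).2 (pi, x).
Definition fE (e : edge Gr) : edge H := odflt (sigma e) (he (fV (g1 e)) (pi (colG e))).

Lemma sig_in i : sigma (ge uG i) \in inc_edges x.
Proof. by rewrite -sim; apply: imset_f; apply: inc_ge_in. Qed.

Lemma pi_inj : injective pi.
Proof.
move=> i j; rewrite !ffunE => h.
have := cinj (sig_in i) (sig_in j) h.
by move/(sinj (inc_ge_in uG i) (inc_ge_in uG j))/ge_inj.
Qed.

Lemma fV_iota i (w : vert Gr) : fV (iotaG i w) = mH (pi i) (fV w).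
Proof. by rewrite /fV /= ffunE. Qed.

Lemma fE_ge (v : vert Gr) i : fE (ge v i) = odflt (sigma (ge v i)) (he (fV v) (pi i)).
Proof.
rewrite /fE g1_ge colG_ge; case: ((val v).1 i) => //=.
by rewrite fV_iota he_mH.
Qed.

Lemma fE_inj (v : vert Gr) : {in inc_edges v &, injective fE}.
Proof.
move=> e f he' hf'; move: he' hf'; rewrite !inc_ge => /eqP he' /eqP hf'.
rewrite he' hf' !fE_ge.
have [e1 [h1 _ c1]] := he_spec (fV v) (pi (colG e)).
have [e2 [h2 _ c2]] := he_spec (fV v) (pi (colG f)).
rewrite h1 h2 /= => h12.
have : pi (colG e) = pi (colG f) by rewrite -c1 -c2 h12.
by move/pi_inj ->.
Qed.

Lemma cov : covering fV fE.
Proof.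
split.
  move=> e; change ([set fV (g1 e); fV (iotaG (colG e) (g1 e))] = ends (fE e)).
  rewrite fV_iota /fE.
  have [e' [h _ _]] := he_spec (fV (g1 e)) (pi (colG e)).
  by rewrite h /= (ends_he h).
move=> v; split; first exact: fE_inj.
apply/eqP; rewrite eqEcard; apply/andP; split.
  apply/subsetP => _ /imsetP [e he' ->]; move: he'; rewrite inc_ge => /eqP ->.
  rewrite fE_ge; have [e1 [h1 hin _]] := he_spec (fV v) (pi (colG e)).
  by rewrite h1.
by rewrite Hreg card_in_imset ?Gr_regular //; apply: fE_inj.
Qed.

Lemma fVu : fV uG = x.
Proof. by rewrite /fV /= ffunE. Qed.

Lemma fE_agree : {in @inc_edges Gr uG, forall e, fE e = sigma e}.
Proof.
move=> e; rewrite inc_ge => /eqP ->.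
rewrite fE_ge fVu.
have -> : pi (colG e) = c (sigma (ge uG (colG e))) by rewrite ffunE.
by rewrite he_inc // sig_in.
Qed.
End Cov.
End HC.

Theorem mainTheorem5 (k : nat) (H : mgraph) :
  1 <= k -> connected_graph H -> regular H k -> edge_colorable H k ->
  exists (G : mgraph) (u : vert G),
    [/\ simple_graph G, connected_graph G, regular G k, edge_colorable G k &
    forall (x : vert H) (sigma : edge G -> edge H),
      {in inc_edges u &, injective sigma} ->
      sigma @: inc_edges u = inc_edges x ->
      exists (fV : vert G -> vert H) (fE : edge G -> edge H),
        [/\ covering fV fE, fV u = x &
            {in inc_edges u, forall e, fE e = sigma e}]].
Proof.
move=> _ _ Hreg [c Hc].
exists (Gr c), (uG c); split.
- exact: Gr_simple.
- exact: Gr_connected.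
- exact: Gr_regular.
- exact: Gr_colorable.
move=> x sigma sinj sim.
exists (fV x sigma), (fE x sigma); split.
- exact: cov.
- exact: fVu.
- exact: fE_agree.
Qed.
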